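(* Let $r>0$, let $U=\{(x_1,\dots,x_n)\in\mathbb{R}^n:|x_1|+\cdots+|x_n|\le r\}$, and let $\Lambda\subset\mathbb{R}^n$ be the lattice generated by $d_1\mathbf e_1,\dots,d_n\mathbf e_n$ with all $d_i>0$ ($\mathbf e_i$ the standard unit vectors). For $S\subseteq\{1,\dots,n\}$ let $d_S=\sum_{i\in S}d_i$. Then $$\#(\Lambda\cap U)\ge\frac1{n!\,d_1\cdots d_n}\sum_{S\subseteq\{1,\dots,n\},\ d_S\le r}(r-d_S)^n.$$ *)

(* Defs.v *)
From mathcomp Require Import all_boot all_order all_algebra.
Set Implicit Arguments. Unset Strict Implicit. Unset Printing Implicit Defensive.
Import Order.TTheory GRing.Theory Num.Theory.
Local Open Scope ring_scope.

(* The lattice Lambda generated by d_1 e_1, ..., d_n e_n consists of the points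
   x = (k_1 d_1, ..., k_n d_n) with k : 'I_n -> int, distinct k giving distinct
   points (d_i > 0). *)

Definition lattice_pt (R : realFieldType) (n : nat) (d : 'I_n -> R)
  (k : 'I_n -> int) : 'I_n -> R := fun i => (k i)%:~R * d i.

Definition in_U (R : realFieldType) (n : nat) (r : R) (x : 'I_n -> R) : bool :=
  \sum_(i < n) `|x i| <= r.

(* A bound N with |k_i| <= N for every lattice point in U (|k_i| d_i <= r). *)
Definition box_bound (R : archiRealFieldType) (n : nat) (r : R) (d : 'I_n -> R) : nat :=
  (\sum_(i < n) Num.trunc (r / d i))%N.

(* Integer coordinate vector encoded by an element of the box [-N, N]^n. *)
Definition box_vec (n N : nat) (c : {ffun 'I_n -> 'I_(N + N).+1}) : 'I_n -> int :=
  fun i => (nat_of_ord (c i))%:Z - N%:Z.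

Definition lattice_count (R : archiRealFieldType) (n : nat) (r : R) (d : 'I_n -> R) : nat :=
  #|[set c : {ffun 'I_n -> 'I_(box_bound r d + box_bound r d).+1} |
      in_U r (lattice_pt d (box_vec c))]|.

Definition dS (R : realFieldType) (n : nat) (d : 'I_n -> R) (S : {set 'I_n}) : R :=
  \sum_(i in S) d i.

(* Main.v *)
Require Import Defs.
From mathcomp Require Import all_boot all_order all_algebra.
Set Implicit Arguments. Unset Strict Implicit. Unset Printing Implicit Defensive.
Import Order.TTheory GRing.Theory Num.Theory.
Local Open Scope ring_scope.

Definition fcons (T : Type) n (t : T) (g : {ffun 'I_n -> T}) : {ffun 'I_n.+1 -> T} :=
  [ffun i => if unlift ord0 i is Some j then g j else t].

Lemma split_card (T : finType) n (P : {ffun 'I_n.+1 -> T} -> bool) :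
  #|[set f | P f]| = (\sum_(t : T) #|[set g : {ffun 'I_n -> T} | P (fcons t g)]|)%N.
Proof.
rewrite -sum1_card big_mkcond /=.
rewrite (reindex (fun p : T * {ffun 'I_n -> T} => fcons p.1 p.2)) /=; last first.
  exists (fun f : {ffun 'I_n.+1 -> T} => (f ord0, [ffun i => f (lift ord0 i)])).
    move=> [t g] _ /=; congr pair; first by rewrite ffunE unlift_none.
    by apply/ffunP=> i; rewrite !ffunE liftK.
  move=> f _ /=; apply/ffunP=> i; rewrite !ffunE.
  by case: unliftP => [j ->|->]; rewrite ?ffunE.
rewrite -(pair_bigA _ (fun t g => if fcons t g \in [set f | P f] then 1%N else 0%N)) /=.
apply eq_bigr => t _ .
rewrite -sum1_card [RHS]big_mkcond /=. by apply eq_bigr => g _; rewrite !inE.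
Qed.

From mathcomp Require Import ring lra.

Lemma powdiff (R : realFieldType) (a b e : R) n : 0 <= b -> b <= a -> a - b <= e ->
  a ^+ n.+1 - b ^+ n.+1 <= n.+1%:R * a ^+ n * e.
Proof.
move=> b0 ba abe.
have a0 : 0 <= a by apply: le_trans ba.
rewrite subrXX.
have HX : \sum_(i < n.+1) a ^+ (n.+1.-1 - i) * b ^+ i <= n.+1%:R * a ^+ n.
  have -> : n.+1%:R * a ^+ n = \sum_(i < n.+1) a ^+ n.
    by rewrite sumr_const card_ord mulr_natl.
  apply: ler_sum => i _ /=.
  have hi : (i <= n)%N by rewrite -ltnS.
  have -> : a ^+ n = a ^+ (n - i) * a ^+ i by rewrite -exprD subnK.
  rewrite /= ler_wpM2l //; first exact: exprn_ge0.
  by rewrite lerXn2r // nnegrE.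
have X0 : 0 <= \sum_(i < n.+1) a ^+ (n.+1.-1 - i) * b ^+ i.
  by apply: sumr_ge0 => i _; rewrite mulr_ge0 // exprn_ge0.
apply: le_trans (ler_wpM2r X0 abe) _.
rewrite mulrC ler_wpM2r //; apply: le_trans abe; lra.
Qed.

Definition Cnt (R : realFieldType) n (M : nat) (d : 'I_n -> R) (s : R) : nat :=
  #|[set m : {ffun 'I_n -> 'I_M.+1} | \sum_(i < n) (m i : nat)%:R * d i <= s]|.

Lemma Cnt_split (R : realFieldType) n M (d : 'I_n.+1 -> R) s :
  Cnt M d s = (\sum_(t : 'I_M.+1) Cnt M (fun i => d (lift ord0 i)) (s - (t : nat)%:R * d ord0))%N.
Proof.
rewrite /Cnt split_card; apply: eq_bigr => t _; apply: eq_card => g.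
rewrite !inE big_ord_recl /fcons ffunE unlift_none.
under eq_bigr do rewrite ffunE liftK.
by rewrite addrC -lerBrDr.
Qed.

Lemma cnt_lb (R : realFieldType) M n : forall (d : 'I_n -> R) s,
  (forall i, 0 < d i) -> 0 <= s -> (forall i, s < M.+1%:R * d i) ->
  s ^+ n <= (Cnt M d s)%:R * ((n`!)%:R * \prod_(i < n) d i).
Proof.
elim: n => [|n IH] d s hd s0 hs.
  rewrite expr0 big_ord0 mulr1 fact0 mulr1.
  rewrite /Cnt.
  have -> : [set m : {ffun 'I_0 -> 'I_M.+1} | \sum_(i < 0) (m i : nat)%:R * d i <= s] = setT.
    by apply/setP => m; rewrite !inE big_ord0 s0.
  by rewrite cardsT card_ffun !card_ord.
set d0 := d ord0.
have d00 : 0 < d0 by apply: hd.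
pose a (t : nat) := if t%:R * d0 <= s then s - t%:R * d0 else 0.
have aM : a M.+1 = 0.
  by rewrite /a; case: ifP => // h; have := hs ord0; rewrite -/d0; lra.
have a0 : a 0%N = s by rewrite /a mul0r s0 subr0.
have tel : s ^+ n.+1 = \sum_(t < M.+1) (a t ^+ n.+1 - a t.+1 ^+ n.+1).
  rewrite -(big_mkord xpredT (fun t => a t ^+ n.+1 - a t.+1 ^+ n.+1)).
  rewrite -(opprK (\sum_(0 <= t < M.+1) _)) -sumrN.
  under eq_bigr do rewrite opprB.
  by rewrite telescope_sumr // aM a0 expr0n /= sub0r opprK.
rewrite tel Cnt_split natr_sum mulr_suml.
apply: ler_sum => t _.
rewrite factS natrM big_ord_recl -/d0.
set d' := fun i => d (lift ord0 i).
set C := Cnt M d' _.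
have C0 : 0 <= C%:R * ((n`!)%:R * \prod_(i < n) d (lift ord0 i)).
  apply: mulr_ge0 => //; apply: mulr_ge0 => //; apply: prodr_ge0 => i _.
  exact: ltW (hd _).
have -> : C%:R * ((n.+1)%:R * (n`!)%:R * (d0 * \prod_(i < n) d (lift ord0 i))) =
   (n.+1)%:R * (C%:R * ((n`!)%:R * \prod_(i < n) d (lift ord0 i))) * d0 by ring.
rewrite /a; case: ifP => ht; last first.
  have -> : ((t.+1)%:R * d0 <= s) = false.
    apply/negbTE; move/negbT: ht; rewrite -!ltNge => ht.
    by apply: lt_le_trans ht _; rewrite ler_wpM2r ?ler_nat // ltW.
  rewrite expr0n /= subr0.
  by apply: mulr_ge0 => //; [apply: mulr_ge0|apply: ltW].
have IH' := IH d' (s - t%:R * d0) (fun i => hd _) _ _.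
have st0 : 0 <= s - t%:R * d0 by rewrite subr_ge0.
have {}IH' := IH' st0.
have stlt : forall i, s - t%:R * d0 < M.+1%:R * d' i.
  move=> i; apply: le_lt_trans (hs (lift ord0 i)).
  by rewrite lerBlDr lerDl mulr_ge0 // ltW.
have {}IH' := IH' stlt.
rewrite -/C in IH'.
set b := (if _ then _ else _).
have hb : 0 <= b by rewrite /b; case: ifP => //; rewrite subr_ge0.
have hba : b <= s - t%:R * d0.
  rewrite /b; case: ifP => // h.
  by rewrite lerB // ler_wpM2r ?ler_nat // ltW.
have hab : s - t%:R * d0 - b <= d0.
  rewrite /b; case: ifP => h; last first.
    by move/negbT: h; rewrite -ltNge -natr1 mulrDl mul1r => h; lra.
  by rewrite -natr1 mulrDl mul1r; lra.
have P := powdiff n hb hba hab.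
apply: le_trans P _.
rewrite ler_wpM2r ?(ltW d00) // ler_wpM2l //.
Qed.

From mathcomp Require Import zify.


Lemma trunc_le_N (R : archiRealFieldType) n (r : R) (d : 'I_n -> R) i :
  (Num.trunc (r / d i) <= box_bound r d)%N.
Proof. by rewrite /box_bound (bigD1 i) //= leq_addr. Qed.

Lemma term_le (R : realFieldType) n (d : 'I_n -> R) (m : 'I_n -> nat) i :
  (forall j, 0 < d j) -> (m i)%:R * d i <= \sum_(j < n) (m j)%:R * d j.
Proof.
move=> hd; rewrite (bigD1 i) //= lerDl; apply: sumr_ge0 => j _.
by rewrite mulr_ge0 // ltW.
Qed.

Lemma dS_ge0 (R : realFieldType) n (d : 'I_n -> R) (S : {set 'I_n}) :
  (forall j, 0 < d j) -> 0 <= dS d S.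
Proof. by move=> hd; apply: sumr_ge0 => j _; rewrite ltW. Qed.

Lemma dS_le (R : realFieldType) n (d : 'I_n -> R) (S : {set 'I_n}) i :
  (forall j, 0 < d j) -> i \in S -> d i <= dS d S.
Proof.
move=> hd iS; rewrite /dS (bigD1 i) //= lerDl; apply: sumr_ge0 => j _.
by rewrite ltW.
Qed.

Ltac gen_ord := repeat match goal with |- context [nat_of_ord ?x] =>
  let y := fresh "y" in move: (nat_of_ord x) => y end.

Ltac gen_v v := repeat match goal with |- context [v ?a ?b] => let z := fresh "z" in move: (v a b) => z end.

Theorem lemma2p5p3 (R : archiRealFieldType) (n : nat) (r : R) (d : 'I_n -> R)
  (hr : 0 < r) (hd : forall i, 0 < d i) :
  (lattice_count r d)%:R >=
    ((n`!)%:R * \prod_(i < n) d i)^-1 *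
      \sum_(S : {set 'I_n} | dS d S <= r) (r - dS d S) ^+ n.
Proof.
set N := box_bound r d.
pose D := [set p : {set 'I_n} * {ffun 'I_n -> 'I_N.+1} |
   (dS d p.1 <= r) && (\sum_(i < n) (p.2 i : nat)%:R * d i <= r - dS d p.1)].
pose v (p : {set 'I_n} * {ffun 'I_n -> 'I_N.+1}) (i : 'I_n) : nat :=
  if i \in p.1 then (N - (p.2 i).+1)%N else (N + p.2 i)%N.
pose f p : {ffun 'I_n -> 'I_(N + N).+1} := [ffun i => inord (v p i)].
have bnd : forall p, p \in D -> forall i, i \in p.1 -> ((p.2 i).+1 <= N)%N.
  move=> p; rewrite inE => /andP [h1 h2] i iS.
  have h3 := term_le (fun j => p.2 j : nat) i hd.
  have h4 := @dS_le R n d p.1 i hd iS.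
  have h5 : ((p.2 i).+1)%:R * d i <= r.
    rewrite -natr1 mulrDl mul1r; lra.
  apply: leq_trans (trunc_le_N r d i).
  rewrite truncn_ge_nat; last by rewrite divr_ge0 // ltW.
  by rewrite ler_pdivlMr.
have vE : forall p, p \in D -> forall i, nat_of_ord (f p i) = v p i.
  move=> p pD i; rewrite ffunE inordK // /v.
  have := ltn_ord (p.2 i); case: ifP => iS; move: (nat_of_ord (p.2 i)) => x; gen_v v; clearbody N; gen_ord; lia.
have key : forall p, p \in D -> forall i,
    ((i \in p.1) -> (v p i + (p.2 i).+1 = N)%N) /\
    ((i \notin p.1) -> v p i = (N + p.2 i)%N).
  move=> p pD i; rewrite /v; split => iS; last by rewrite (negbTE iS).
  by rewrite iS; have := bnd p pD i iS; gen_v v; clearbody N; gen_ord; lia.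
have finj : {in D &, injective f}.
  move=> p q pD qD /ffunP E.
  have Ei : forall i, v p i = v q i.
    by move=> i; rewrite -(vE p pD) -(vE q qD) E.
  have ES : p.1 = q.1.
    apply/setP => i.
    have [k1 k2] := key p pD i; have [l1 l2] := key q qD i.
    have := Ei i.
    case: (i \in p.1) k1 k2; case: (i \in q.1) l1 l2 => l1 l2 k1 k2 //=.
      by have := k1 isT; have := l2 isT; gen_v v; clearbody N; gen_ord; lia.
    by have := k2 isT; have := l1 isT; gen_v v; clearbody N; gen_ord; lia.
  move: p q pD qD E Ei ES key => [S m] [S' m'] pD qD E Ei /= ES key.
  subst S'; congr pair; apply/ffunP => i; apply: val_inj => /=.
  have [k1 k2] := key _ pD i; have [l1 l2] := key _ qD i.
  have := Ei i; rewrite /=.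
  case iS: (i \in S) k1 k2 l1 l2 => k1 k2 l1 l2.
    by have := k1 isT; have := l1 isT; gen_v v; clearbody N; gen_ord; lia.
  by have := k2 isT; have := l2 isT; gen_v v; clearbody N; gen_ord; lia.
have fsub : f @: D \subset [set c : {ffun 'I_n -> 'I_(N + N).+1} |
      in_U r (lattice_pt d (box_vec c))].
  apply/subsetP => c /imsetP [p pD ->]; rewrite inE /in_U /lattice_pt /box_vec.
  have tE : forall i, `|((f p i : nat)%:Z - N%:Z)%:~R * d i| =
       (p.2 i : nat)%:R * d i + (if i \in p.1 then d i else 0).
    move=> i; rewrite (vE p pD) normrM (gtr0_norm (hd i)).
    have [k1 k2] := key p pD i.
    case iS: (i \in p.1).
      have -> : ((v p i)%:Z - N%:Z = - ((p.2 i).+1)%:Z)%R.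
        by have := k1 iS; gen_v v; clearbody N; gen_ord; lia.
      by rewrite mulrNz normrN -pmulrn normr_nat -natr1 mulrDl mul1r.
    have -> : ((v p i)%:Z - N%:Z = ((p.2 i : nat))%:Z)%R.
      by rewrite k2 ?iS //; gen_v v; clearbody N; gen_ord; lia.
    by rewrite -pmulrn normr_nat addr0.
  under eq_bigr do rewrite tE.
  rewrite big_split /= -big_mkcond /=.
  move: pD; rewrite inE => /andP [h1 h2].
  rewrite /dS in h2 *; lra.
have cardD : #|D| = (\sum_(S : {set 'I_n} | (dS d S <= r)%R) Cnt N d (r - dS d S))%N.
  rewrite -sum1_card big_mkcond /=.
  rewrite (eq_bigr (fun p => if (p.1, p.2) \in D then 1%N else 0%N)); last by move=> [a b].
  rewrite -(pair_bigA _ (fun S m => if (S, m) \in D then 1%N else 0%N)) /=.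
  rewrite [RHS]big_mkcond /=; apply: eq_bigr => S _.
  case: ifP => hS.
    rewrite /Cnt -sum1_card [RHS]big_mkcond /=; apply: eq_bigr => m _.
    by rewrite !inE hS.
  by rewrite big1 // => m _; rewrite inE hS.
have cle : (\sum_(S : {set 'I_n} | (dS d S <= r)%R) Cnt N d (r - dS d S) <= lattice_count r d)%N.
  rewrite -cardD -(card_in_imset finj); exact: subset_leq_card fsub.
apply: le_trans (_ : (\sum_(S : {set 'I_n} | dS d S <= r) (Cnt N d (r - dS d S))%:R) <= _);
  last by rewrite -natr_sum ler_nat.
have P0 : 0 < (n`!)%:R * \prod_(i < n) d i.
  by rewrite mulr_gt0 ?ltr0n ?fact_gt0 // prodr_gt0.
rewrite mulr_sumr; apply: ler_sum => S hS.
rewrite mulrC ler_pdivrMr //.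
apply: cnt_lb => //; first by rewrite subr_ge0.
move=> i.
have h0 := @dS_ge0 R n d S hd.
have h1 : r < (Num.trunc (r / d i)).+1%:R * d i.
  by rewrite -ltr_pdivrMr // truncnS_gt.
have h2 : (Num.trunc (r / d i)).+1%:R * d i <= N.+1%:R * d i.
  by apply: ler_wpM2r; [exact: ltW | rewrite ler_nat ltnS trunc_le_N].
lra.
Qed.
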